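(* For each $n\in\mathbb{N}$ let $A_n\subseteq\mathcal{R}$ be L-measurable, and suppose $\lim_{N\to\infty}M\big(\bigcup_{n=1}^N A_n\big)$ exists in $\mathcal{R}$. Then $\bigcup_{n=1}^\infty A_n$ is L-measurable.
   Context: $\mathcal{R}$ denotes the Levi-Civita field: functions $x:\mathbb{Q}\to\mathbb{R}$ with left-finite support, with componentwise addition and formal power series multiplication, ordered by $x>0$ iff $x\ne0$ and $x[\min\operatorname{supp}x]>0$; it is a non-Archimedean ordered field extension of $\mathbb{R}$, Cauchy complete in the order topology, in which all limits and series are taken (a series $\sum a_n$ converges iff $a_n\to0$). An interval is a set $[a,b],[a,b),(a,b]$ or $(a,b)$ with $a<b$ in $\mathcal{R}$, of length $l=b-a$. A cover of $A\subseteq\mathcal{R}$ is a sequence of intervals $(S_n)_{n\ge1}$ with $A\subseteq\bigcup_n S_n$ and $\sum_n l(S_n)$ convergent in $\mathcal{R}$. $A$ is called outer measurable if the infimum $\inf\{\sum_n l(S_n): (S_n)\text{ a cover of }A\}$ exists in $\mathcal{R}$; this infimum is then called the outer measure $M_u(A)$. An outer measurable set $A\subseteq\mathcal{R}$ is L-measurable if for every outer measurable $B\subseteq\mathcal{R}$ both $A\cap B$ and $A^c\cap B$ (where $A^c=\mathcal{R}\setminus A$) are outer measurable and $M_u(B)=M_u(A\cap B)+M_u(A^c\cap B)$; then its L-measure is $M(A):=M_u(A)$. Finite unions of L-measurable sets are L-measurable, so $M(\bigcup_{n=1}^N A_n)$ is defined. *)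

(* Defs.v *)
(* The Levi-Civita field over an arbitrary realType R
   (all realTypes are isomorphic to the classical reals). *)
From HB Require Import structures.
From mathcomp Require Import all_boot all_order all_algebra.
From mathcomp Require Import all_classical all_reals.
Set Implicit Arguments. Unset Strict Implicit. Unset Printing Implicit Defensive.
Import Order.TTheory GRing.Theory Num.Theory.
Local Open Scope classical_set_scope.
Local Open Scope ring_scope.

Section LeviCivita.
Variable R : realType.

Definition left_finite (x : rat -> R) : Prop :=
  forall q : rat, finite_set [set r | x r != 0 /\ r < q].

Record LC := MkLC { lc_val : rat -> R; lc_lf : left_finite lc_val }.

Lemma left_finite0 : left_finite (fun _ => 0).
Proof.
move=> q; apply: (sub_finite_set _ (finite_set0 rat)).
by move=> r /= []; rewrite eqxx.
Qed.

Lemma left_finite_add (x y : rat -> R) :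
  left_finite x -> left_finite y -> left_finite (fun r => x r + y r).
Proof.
move=> hx hy q.
apply: (sub_finite_set (B := [set r | x r != 0 /\ r < q] `|` [set r | y r != 0 /\ r < q])).
  move=> r /= [h hq]; case: (eqVneq (x r) 0) => hxr; last by left.
  by right; split=> //; move: h; rewrite hxr add0r.
by rewrite finite_setU; split.
Qed.

Lemma left_finite_opp (x : rat -> R) : left_finite x -> left_finite (fun r => - x r).
Proof.
move=> hx q; apply: (sub_finite_set _ (hx q)).
by move=> r /= [h hq]; split=> //; rewrite -oppr_eq0.
Qed.

Definition lc0 : LC := MkLC left_finite0.
Definition lc_add (x y : LC) : LC := MkLC (left_finite_add (lc_lf x) (lc_lf y)).
Definition lc_opp (x : LC) : LC := MkLC (left_finite_opp (lc_lf x)).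
Definition lc_sub (x y : LC) : LC := lc_add x (lc_opp y).

(* x > 0 iff x <> 0 and x[min supp x] > 0 (min supp exists by left-finiteness) *)
Definition lc_pos (x : LC) : Prop :=
  exists q : rat, 0 < lc_val x q /\ forall r : rat, r < q -> lc_val x r = 0.
Definition lc_lt (x y : LC) : Prop := lc_pos (lc_sub y x).
Definition lc_le (x y : LC) : Prop := lc_lt x y \/ x = y.

Definition lc_cvg (u : nat -> LC) (l : LC) : Prop :=
  forall a b : LC, lc_lt a l -> lc_lt l b ->
    exists N : nat, forall n : nat, (N <= n)%N -> lc_lt a (u n) /\ lc_lt (u n) b.

Fixpoint lc_psum (f : nat -> LC) (n : nat) : LC :=
  match n with O => lc0 | S m => lc_add (lc_psum f m) (f m) end.

Definition lc_series_to (f : nat -> LC) (s : LC) : Prop := lc_cvg (lc_psum f) s.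

Record interval := MkInterval { ia : LC; ib : LC; ia_closed : bool; ib_closed : bool }.
Definition is_interval (I : interval) : Prop := lc_lt (ia I) (ib I).
Definition interval_set (I : interval) : set LC :=
  [set x | (if ia_closed I then lc_le (ia I) x else lc_lt (ia I) x) /\
           (if ib_closed I then lc_le x (ib I) else lc_lt x (ib I))].
Definition ilength (I : interval) : LC := lc_sub (ib I) (ia I).

Definition cover_with_sum (A : set LC) (S : nat -> interval) (s : LC) : Prop :=
  (forall n, is_interval (S n)) /\
  A `<=` \bigcup_n interval_set (S n) /\
  lc_series_to (fun n => ilength (S n)) s.

Definition cover_sums (A : set LC) : set LC :=
  [set s | exists S : nat -> interval, cover_with_sum A S s].

Definition lc_is_inf (E : set LC) (m : LC) : Prop :=
  (forall s, E s -> lc_le m s) /\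
  (forall m', (forall s, E s -> lc_le m' s) -> lc_le m' m).

Definition outer_measure (A : set LC) (m : LC) : Prop := lc_is_inf (cover_sums A) m.
Definition outer_measurable (A : set LC) : Prop := exists m, outer_measure A m.

Definition L_measurable (A : set LC) : Prop :=
  outer_measurable A /\
  forall (B : set LC) (mB : LC), outer_measure B mB ->
    exists m1 m2 : LC, outer_measure (A `&` B) m1 /\ outer_measure (~` A `&` B) m2 /\
                      mB = lc_add m1 m2.

End LeviCivita.

(* Main.v *)
Require Import Defs.
From HB Require Import structures.
From mathcomp Require Import all_boot all_order all_algebra.
From mathcomp Require Import all_classical all_reals.
From mathcomp Require Import ring lra.
From mathcomp Require finmap zify.
From Stdlib Require Cantor.
Set Implicit Arguments. Unset Strict Implicit. Unset Printing Implicit Defensive.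
Import Order.TTheory GRing.Theory Num.Theory.
Local Open Scope classical_set_scope.
Local Open Scope ring_scope.

Module M1.
Import finmap.


Lemma seq_min (s : seq rat) a : a \in s -> exists2 m, m \in s & forall y : rat, y \in s -> m <= y.
Proof.
elim: s a => [//|b s IH] a; rewrite inE => /orP [/eqP _|ha].
  case: (boolP (has (fun y => y < b) s)) => [/hasP [c cs _]|hn].
    have [m ms hm] := IH c cs.
    case: (leP b m) => hbm.
      exists b; first by rewrite inE eqxx.
      move=> y; rewrite inE => /orP [/eqP ->//|/hm]; exact: le_trans.
    exists m; first by rewrite inE ms orbT.
    move=> y; rewrite inE => /orP [/eqP ->|/hm //]; exact: ltW.
  exists b; first by rewrite inE eqxx.
  move=> y; rewrite inE => /orP [/eqP ->//|ys].
  by rewrite leNgt; apply/negP => hy; move/hasPn: hn => /(_ y ys); rewrite hy.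
have [m ms hm] := IH a ha.
case: (leP b m) => hbm.
  exists b; first by rewrite inE eqxx.
  move=> y; rewrite inE => /orP [/eqP ->//|/hm]; exact: le_trans.
exists m; first by rewrite inE ms orbT.
move=> y; rewrite inE => /orP [/eqP ->|/hm //]; exact: ltW.
Qed.

Section LC1.
Variable R : realType.
Local Notation LC := (LC R).
Implicit Types x y z : LC.

Lemma lc_ext x y : (forall r, lc_val x r = lc_val y r) -> x = y.
Proof.
case: x y => [fx hx] [fy hy] /= h.
have e : fx = fy by apply: funext.
subst fy; by rewrite (Prop_irrelevance hx hy).
Qed.

Definition vb x (q : rat) := forall r, r < q -> lc_val x r = 0.

Lemma min_supp x r : lc_val x r != 0 -> exists q, lc_val x q != 0 /\ vb x q.
Proof.
move=> hr.
have /finite_fsetP [X eX] := lc_lf x (r + 1).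
have rX : r \in X.
  have : [set` X] r by rewrite -eX; split => //; rewrite ltrDl.
  by [].
have [m mX hm] := seq_min (s := finmap.enum_fset X) rX.
have : [set` X] m by [].
rewrite -eX => -[hm0 hmr]; exists m; split => // s hs.
apply/eqP; rewrite -[_ == _]negbK; apply/negP => hs0.
have : [set` X] s by rewrite -eX; split => //; exact: lt_trans hmr.
move=> /hm; rewrite leNgt hs //.
Qed.

Lemma pos_lead x q : lc_pos x -> vb x q -> lc_val x q != 0 -> 0 < lc_val x q.
Proof.
move=> [q1 [h1 hb1]] hb h0.
case: (ltgtP q1 q) => [hlt|hlt|e]; last by subst q1.
  by rewrite hb // ltxx in h1.
by rewrite hb1 // eqxx in h0.
Qed.

Lemma not_pos0 : ~ lc_pos (lc0 R).
Proof. by move=> [q [h _]]; rewrite ltxx in h. Qed.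

Lemma not_pos_both x : lc_pos x -> lc_pos (lc_opp x) -> False.
Proof.
move=> [q1 [h1 hb1]] [q2 [h2 hb2]] /=.
move: h2 hb2 => /= h2 hb2.
case: (ltgtP q1 q2) => [hlt|hlt|e].
  by have := hb2 _ hlt; move/eqP; rewrite oppr_eq0 => /eqP e; rewrite e ltxx in h1.
  by rewrite hb1 // oppr0 ltxx in h2.
by subst q2; rewrite oppr_gt0 in h2; have := lt_trans h1 h2; rewrite ltxx.
Qed.

Lemma pos_add x y : lc_pos x -> lc_pos y -> lc_pos (lc_add x y).
Proof.
move=> [q1 [h1 hb1]] [q2 [h2 hb2]].
case: (ltgtP q1 q2) => [hlt|hlt|e].
- exists q1; split => /=; first by rewrite hb2 // addr0.
  by move=> r hr; rewrite hb1 // hb2 ?addr0 //; exact: lt_trans hlt.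
- exists q2; split => /=; first by rewrite hb1 // add0r.
  by move=> r hr; rewrite hb1 ?hb2 ?addr0 //; exact: lt_trans hlt.
- subst q2; exists q1; split => /=; first by rewrite addr_gt0.
  by move=> r hr; rewrite hb1 // hb2 // addr0.
Qed.

Lemma lc_tricho x : lc_pos x \/ x = lc0 R \/ lc_pos (lc_opp x).
Proof.
case: (pselect (exists r, lc_val x r != 0)) => [[r hr]|hn].
  have [q [hq hb]] := min_supp hr.
  case: (ltgtP (lc_val x q) 0) => [hneg|hpos|e]; last by rewrite e eqxx in hq.
    by right; right; exists q; split => /=; [rewrite oppr_gt0|move=> s /hb ->; rewrite oppr0].
  by left; exists q.
right; left; apply: lc_ext => r /=.
by apply/eqP; rewrite -[_ == _]negbK; apply/negP => h; apply: hn; exists r.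
Qed.

Lemma pos_ext x y : lc_pos x -> (forall r, lc_val x r = lc_val y r) -> lc_pos y.
Proof. by move=> h /lc_ext <-. Qed.

End LC1.

End M1.
Import M1.


Section LC2.
Variable R : realType.
Local Notation LC := (LC R).
Implicit Types x y z a b c d : LC.

Ltac posx h := apply: (pos_ext h) => ? /=; ring.

Lemma llt_irr x : ~ lc_lt x x.
Proof. move=> h; apply: (@not_pos0 R); apply: (pos_ext h) => r /=; ring. Qed.

Lemma llt_trans x y z : lc_lt x y -> lc_lt y z -> lc_lt x z.
Proof. move=> h1 h2; have h := pos_add h2 h1; posx h. Qed.

Lemma llt_asym x y : lc_lt x y -> lc_lt y x -> False.
Proof. by move=> h1 h2; apply: (llt_irr (llt_trans h1 h2)). Qed.

Lemma llt_total x y : lc_lt x y \/ x = y \/ lc_lt y x.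
Proof.
case: (lc_tricho (lc_sub y x)) => [h|[h|h]]; first by left.
  right; left; apply: lc_ext => r; have := f_equal (fun u => lc_val u r) h => /=.
  by move/eqP; rewrite subr_eq0 => /eqP.
by right; right; posx h.
Qed.

Lemma lle_refl x : lc_le x x. Proof. by right. Qed.

Lemma llt_le x y : lc_lt x y -> lc_le x y. Proof. by left. Qed.

Lemma lle_lt_trans x y z : lc_le x y -> lc_lt y z -> lc_lt x z.
Proof. by case=> [h|->] //; exact: llt_trans. Qed.

Lemma llt_le_trans x y z : lc_lt x y -> lc_le y z -> lc_lt x z.
Proof. by move=> h [h'|<-] //; exact: llt_trans h'. Qed.

Lemma lle_trans x y z : lc_le x y -> lc_le y z -> lc_le x z.
Proof. by case=> [h|->] // h2; left; exact: llt_le_trans h2. Qed.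

Lemma lle_antisym x y : lc_le x y -> lc_le y x -> x = y.
Proof. by case=> [h|//] [h'|//]; case: (llt_asym h h'). Qed.

Lemma lnot_lt_le x y : ~ lc_lt y x -> lc_le x y.
Proof. by move=> h; case: (llt_total x y) => [|[|]]; [left|right|]. Qed.

Lemma llt_not_le x y : lc_lt x y -> ~ lc_le y x.
Proof. by move=> h [h'|e]; [exact: llt_asym h h'|subst; exact: llt_irr h]. Qed.

Lemma lnot_le_lt x y : ~ lc_le x y -> lc_lt y x.
Proof. by move=> h; case: (llt_total x y) => [h'|[e|//]]; case: h; [left|right]. Qed.

Lemma llt_addr x y z : lc_lt x y -> lc_lt (lc_add x z) (lc_add y z).
Proof. move=> h; posx h. Qed.

Lemma llt_addl x y z : lc_lt x y -> lc_lt (lc_add z x) (lc_add z y).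
Proof. move=> h; posx h. Qed.

Lemma lle_addr x y z : lc_le x y -> lc_le (lc_add x z) (lc_add y z).
Proof. by case=> [h|->]; [left; exact: llt_addr|right]. Qed.

Lemma lle_addl x y z : lc_le x y -> lc_le (lc_add z x) (lc_add z y).
Proof. by case=> [h|->]; [left; exact: llt_addl|right]. Qed.

Lemma llt_add a b c d : lc_lt a b -> lc_lt c d -> lc_lt (lc_add a c) (lc_add b d).
Proof. move=> h1 h2; have h := pos_add h1 h2; posx h. Qed.

Lemma lle_add a b c d : lc_le a b -> lc_le c d -> lc_le (lc_add a c) (lc_add b d).
Proof. move=> h1 h2; apply: (lle_trans (lle_addr c h1)); exact: lle_addl. Qed.

Lemma llt_le_add a b c d : lc_lt a b -> lc_le c d -> lc_lt (lc_add a c) (lc_add b d).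
Proof. move=> h1 h2; apply: (llt_le_trans (llt_addr c h1)); exact: lle_addl. Qed.

Lemma llt_opp x y : lc_lt x y -> lc_lt (lc_opp y) (lc_opp x).
Proof. move=> h; posx h. Qed.

Lemma lle_opp x y : lc_le x y -> lc_le (lc_opp y) (lc_opp x).
Proof. by case=> [h|->]; [left; exact: llt_opp|right]. Qed.

Lemma lpos_lt0 x : lc_pos x -> lc_lt (lc0 R) x.
Proof. move=> h; posx h. Qed.

Lemma llt0_pos x : lc_lt (lc0 R) x -> lc_pos x.
Proof. move=> h; posx h. Qed.

Lemma llt_subpos x y : lc_lt x y -> lc_lt (lc0 R) (lc_sub y x).
Proof. move=> h; posx h. Qed.

Lemma lsubpos_lt x y : lc_lt (lc0 R) (lc_sub y x) -> lc_lt x y.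
Proof. move=> h; posx h. Qed.

Lemma lle_subpos x y : lc_le x y -> lc_le (lc0 R) (lc_sub y x).
Proof.
case=> [h|->]; [left; exact: llt_subpos|right; apply: lc_ext => r /=; ring].
Qed.

Lemma lsubpos_le x y : lc_le (lc0 R) (lc_sub y x) -> lc_le x y.
Proof.
case=> [h|e]; [left; exact: lsubpos_lt|right; apply: lc_ext => r].
by have := f_equal (fun u => lc_val u r) e => /=; move/eqP; rewrite eq_sym subr_eq0 => /eqP.
Qed.

End LC2.


Section LC3.
Variable R : realType.
Local Notation LC := (LC R).
Local Notation z0 := (lc0 R).
Implicit Types x y z a b c d e : LC.

Ltac posx h := apply: (pos_ext h) => ? /=; ring.

Lemma lt_ext x y x' y' : lc_lt x y -> (forall r, lc_val x r = lc_val x' r) ->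
  (forall r, lc_val y r = lc_val y' r) -> lc_lt x' y'.
Proof. by move=> h /lc_ext <- /lc_ext <-. Qed.

Lemma mono_lf (q : rat) : left_finite (fun r => if r == q then (1:R) else 0).
Proof.
move=> p; apply: (sub_finite_set _ (finite_set1 q)) => r /= [].
by case: (r =P q) => // _; rewrite eqxx.
Qed.
Definition mono q : LC := MkLC (mono_lf q).

Definition small e x := lc_lt x e /\ lc_lt (lc_opp e) x.

Lemma V1 e : lc_lt z0 e -> exists q, forall x, vb x q -> small e x.
Proof.
move=> /llt0_pos [q [hq hb]]; exists (q + 1) => x hx.
have hxq : lc_val x q = 0 by apply: hx; rewrite ltrDl.
have hxr : forall r, r < q -> lc_val x r = 0.
  by move=> r hr; apply: hx; apply: (lt_trans hr); rewrite ltrDl.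
split.
- exists q; split => /=; first by rewrite hxq; lra.
  by move=> r hr /=; rewrite hb // hxr //; ring.
- exists q; split => /=; first by rewrite hxq; lra.
  by move=> r hr /=; rewrite hb // hxr //; ring.
Qed.

Lemma V2 q : exists2 e, lc_lt z0 e & forall x, small e x -> vb x q.
Proof.
exists (mono q).
  apply: lpos_lt0; exists q; split => /=; first by rewrite eqxx ltr01.
  by move=> r hr; case: eqP => // e; rewrite e ltxx in hr.
move=> x [h1 h2] r hr; apply/eqP; rewrite -[_ == _]negbK; apply/negP => hx.
have [r0 [h0 hb0]] := min_supp hx.
have r0q : r0 < q.
  rewrite ltNge; apply/negP => hle; move: hx; rewrite hb0 ?eqxx //.
  exact: lt_le_trans hr hle.
have hm : lc_val (mono q) r0 = 0 by rewrite /= (lt_eqF r0q).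
have p1 : 0 < lc_val (lc_sub (mono q) x) r0.
  apply: pos_lead h1 _ _.
    move=> s hs /=; rewrite hb0 // (lt_eqF (lt_trans hs r0q)); ring.
  by rewrite /= (lt_eqF r0q) add0r oppr_eq0.
have p2 : 0 < lc_val (lc_sub x (lc_opp (mono q))) r0.
  apply: pos_lead h2 _ _.
    move=> s hs /=; rewrite hb0 // (lt_eqF (lt_trans hs r0q)); ring.
  by rewrite /= (lt_eqF r0q) !oppr0 addr0.
move: p1 p2; rewrite /= (lt_eqF r0q) oppr0 subr0 sub0r oppr_gt0 => p1 p2.
by have := lt_trans p1 p2; rewrite ltxx.
Qed.

Lemma small_add e e' x y : small e x -> small e' y -> small (lc_add e e') (lc_add x y).
Proof.
move=> [h1 h2] [h3 h4]; split; first exact: llt_add.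
apply: (lt_ext (llt_add h2 h4)) => r //=; ring.
Qed.

Lemma small_le e e' x : small e x -> lc_le e e' -> small e' x.
Proof.
move=> [h1 h2] h; split; first exact: llt_le_trans h1 h.
exact: lle_lt_trans (lle_opp h) h2.
Qed.

Lemma small_opp e x : small e x -> small e (lc_opp x).
Proof.
move=> [h1 h2]; split.
  by apply: (lt_ext (llt_opp h2)) => r //=; ring.
exact: llt_opp.
Qed.

Lemma small0 e : lc_lt z0 e -> small e z0.
Proof. move=> h; split => //; apply: (lt_ext (llt_opp h)) => r //=; ring. Qed.

End LC3.


Section LC4.
Variable R : realType.
Local Notation LC := (LC R).
Local Notation z0 := (lc0 R).
Implicit Types x y z a b c d e h l : LC.
Implicit Types u v : nat -> LC.

Lemma small_ext e x x' : small e x -> (forall r, lc_val x r = lc_val x' r) -> small e x'.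
Proof. by move=> h /lc_ext <-. Qed.

Lemma half_ex e : lc_lt z0 e -> exists2 h, lc_lt z0 h & lc_lt (lc_add h h) e.
Proof.
move=> he; have [q hq] := V1 he; exists (mono R q).
  apply: lpos_lt0; exists q; split => /=; first by rewrite eqxx ltr01.
  by move=> r hr; rewrite (lt_eqF hr).
have [] := hq (lc_add (mono R q) (mono R q)) => // r hr /=.
by rewrite (lt_eqF hr) addr0.
Qed.

Definition cvgS u l := forall e, lc_lt z0 e ->
  exists N, forall n, (N <= n)%N -> small e (lc_sub (u n) l).

Lemma cvg_S u l : lc_cvg u l -> cvgS u l.
Proof.
move=> hc e he.
have h1 : lc_lt (lc_sub l e) l by apply: (lt_ext (llt_addl l (llt_opp he))) => r /=; ring.
have h2 : lc_lt l (lc_add l e) by apply: (lt_ext (llt_addl l he)) => r /=; ring.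
have [N hN] := hc _ _ h1 h2; exists N => n /hN [a1 a2]; split.
  by apply: (lt_ext (llt_addr (lc_opp l) a2)) => r /=; ring.
by apply: (lt_ext (llt_addr (lc_opp l) a1)) => r /=; ring.
Qed.

Lemma S_cvg u l : cvgS u l -> lc_cvg u l.
Proof.
move=> hc a b ha hb.
have ea := llt_subpos ha; have eb := llt_subpos hb.
have [e [he1 he2 he3]] : exists e, [/\ lc_lt z0 e, lc_le e (lc_sub l a) & lc_le e (lc_sub b l)].
  case: (llt_total (lc_sub l a) (lc_sub b l)) => [h|[h|h]].
  - by exists (lc_sub l a); split => //; [exact: lle_refl|left].
  - by exists (lc_sub l a); split => //; [exact: lle_refl|rewrite h; exact: lle_refl].
  - by exists (lc_sub b l); split => //; [left|exact: lle_refl].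
have [N hN] := hc e he1; exists N => n /hN [s1 s2]; split.
  have := llt_addr l (lle_lt_trans (lle_opp he2) s2).
  by move=> h; apply: (lt_ext h) => r /=; ring.
have := llt_addr l (llt_le_trans s1 he3).
by move=> h; apply: (lt_ext h) => r /=; ring.
Qed.

Lemma cvgS_const c : cvgS (fun _ => c) c.
Proof.
move=> e he; exists 0%N => n _; apply: (small_ext (small0 he)) => r /=; ring.
Qed.

Lemma cvgS_add u v l l' : cvgS u l -> cvgS v l' ->
  cvgS (fun n => lc_add (u n) (v n)) (lc_add l l').
Proof.
move=> hu hv e he; have [h h0 hh] := half_ex he.
have [N1 h1] := hu h h0; have [N2 h2] := hv h h0.
exists (maxn N1 N2) => n hn.
have s := small_add (h1 n (leq_trans (leq_maxl _ _) hn)) (h2 n (leq_trans (leq_maxr _ _) hn)).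
apply: (small_ext (small_le s (llt_le hh))) => r /=; ring.
Qed.

Lemma cvgS_opp u l : cvgS u l -> cvgS (fun n => lc_opp (u n)) (lc_opp l).
Proof.
move=> hu e he; have [N hN] := hu e he; exists N => n /hN s.
apply: (small_ext (small_opp s)) => r /=; ring.
Qed.

Lemma cvgS_shift u l k : cvgS u l -> cvgS (fun n => u (n + k)%N) l.
Proof.
move=> hu e he; have [N hN] := hu e he; exists N => n hn; apply: hN.
exact: leq_trans hn (leq_addr _ _).
Qed.

Lemma cvgS_le u v l l' : (forall n, lc_le (u n) (v n)) -> cvgS u l -> cvgS v l' -> lc_le l l'.
Proof.
move=> huv hu hv; apply: lnot_lt_le => hlt.
have [h h0 hh] := half_ex (llt_subpos hlt).
have [N1 h1] := hu h h0; have [N2 h2] := hv h h0.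
have [_ s1] := h1 _ (leq_maxl N1 N2); have [s2 _] := h2 _ (leq_maxr N1 N2).
set n := maxn N1 N2 in s1 s2.
have A := llt_add s1 s2.
have B : lc_le (lc_sub (u n) (v n)) z0.
  have := lle_opp (lle_subpos (huv n)) => -[h'|e]; [left|right].
    by apply: (lt_ext h') => r /=; ring.
  by apply: lc_ext => r; have := f_equal (fun w => lc_val w r) e => /=; lra.
have C := llt_le_add A B.
have D := llt_addr (lc_add l (lc_sub h (u n))) C.
have F : lc_lt (lc_sub l l') (lc_add h h).
  by apply: (lt_ext D) => r /=; ring.
by apply: (llt_asym F hh).
Qed.

Lemma cvgS_uniq u l l' : cvgS u l -> cvgS u l' -> l = l'.
Proof.
move=> h1 h2; apply: lle_antisym.
  by apply: (cvgS_le (u := u) (v := u)) => // n; exact: lle_refl.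
by apply: (cvgS_le (u := u) (v := u)) => // n; exact: lle_refl.
Qed.

Lemma cvgS_ge c u l : (forall n, lc_le c (u n)) -> cvgS u l -> lc_le c l.
Proof. by move=> h hu; apply: (cvgS_le h (cvgS_const c) hu). Qed.

Lemma cvgS_leq c u l : (forall n, lc_le (u n) c) -> cvgS u l -> lc_le l c.
Proof. by move=> h hu; apply: (cvgS_le h hu (cvgS_const c)). Qed.

Definition tends0 u := forall q, exists N, forall n, (N <= n)%N -> vb (u n) q.

Lemma cvgS_tends0 u : cvgS u z0 -> tends0 u.
Proof.
move=> hu q; have [e he hv] := V2 R q; have [N hN] := hu e he.
exists N => n /hN s; apply: hv; apply: (small_ext s) => r /=; ring.
Qed.

Lemma tends0_cvgS u : tends0 u -> cvgS u z0.
Proof.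
move=> hu e he; have [q hq] := V1 he; have [N hN] := hu q.
exists N => n /hN hv; apply: (small_ext (hq _ hv)) => r /=; ring.
Qed.

Lemma cvgS_ext u v l : cvgS u l -> (forall n, u n = v n) -> cvgS v l.
Proof. by move=> h /funext <-. Qed.

Lemma cvgS_diff u l : cvgS u l -> cvgS (fun n => lc_sub (u n.+1) (u n)) z0.
Proof.
move=> hu; have h1 := cvgS_shift 1 hu; have h2 := cvgS_opp hu.
have -> : z0 = lc_add l (lc_opp l) by apply: lc_ext => r /=; ring.
by apply: (cvgS_ext (cvgS_add h1 h2)) => n; rewrite addn1.
Qed.

End LC4.


Section LC5.
Variable R : realType.
Local Notation LC := (LC R).
Local Notation z0 := (lc0 R).
Implicit Types x y z a b c d e h l : LC.
Implicit Types u v : nat -> LC.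

Lemma psum_val u n r : lc_val (lc_psum u n) r = \sum_(i < n) lc_val (u i) r.
Proof. by elim: n => [|n IH]; rewrite ?big_ord0 // big_ord_recr /= IH. Qed.

Lemma psum_tail u N q : (forall n, (N <= n)%N -> vb (u n) q) ->
  forall M, (N <= M)%N -> forall r, r < q -> lc_val (lc_psum u M) r = lc_val (lc_psum u N) r.
Proof.
move=> hv M hM r hr; rewrite -(subnKC hM); elim: (M - N)%N => [|k IH]; first by rewrite addn0.
by rewrite addnS /= IH hv ?addr0 // leq_addr.
Qed.

Lemma completeness u : tends0 u -> exists s, cvgS (lc_psum u) s /\
  forall r, exists N, forall M, (N <= M)%N -> lc_val s r = lc_val (lc_psum u M) r.
Proof.
move=> hu.
pose Nq q := projT1 (cid (hu q)).
have hN q : forall n, (Nq q <= n)%N -> vb (u n) q := projT2 (cid (hu q)).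
pose sv r := lc_val (lc_psum u (Nq (r + 1))) r.
have key q r : r < q -> sv r = lc_val (lc_psum u (Nq q)) r.
  move=> hr; rewrite /sv.
  rewrite -(psum_tail (hN (r + 1)) (leq_maxl (Nq (r + 1)) (Nq q))); last by rewrite ltrDl.
  by rewrite (psum_tail (hN q) (leq_maxr (Nq (r + 1)) (Nq q))).
have lf : left_finite sv.
  move=> q; apply: (sub_finite_set _ (lc_lf (lc_psum u (Nq q)) q)) => r /= [h1 h2].
  by split => //; rewrite -key.
exists (MkLC lf); split.
  move=> e he; have [q hq] := V1 he; exists (Nq q) => n hn; apply: hq => r hr /=.
  by rewrite (psum_tail (hN q) hn hr) -key //; ring.
move=> r; exists (Nq (r + 1)) => M hM /=.
by rewrite /sv (psum_tail (hN (r + 1)) hM) // ltrDl.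
Qed.

Lemma series_point u s : cvgS (lc_psum u) s -> tends0 u /\
  forall r, exists N, forall M, (N <= M)%N -> lc_val s r = lc_val (lc_psum u M) r.
Proof.
move=> hs.
have ht : tends0 u.
  apply: cvgS_tends0; apply: (cvgS_ext (cvgS_diff hs)) => n.
  by apply: lc_ext => r /=; ring.
split => //; have [s' [h1 h2]] := completeness ht.
by rewrite (cvgS_uniq hs h1).
Qed.

Lemma psum_ge0 u : (forall n, lc_le z0 (u n)) -> forall n, lc_le z0 (lc_psum u n).
Proof.
move=> h; elim=> [|n IH] /=; first exact: lle_refl.
have := lle_add IH (h n); have -> // : lc_add z0 z0 = z0 by apply: lc_ext => r /=; ring.
Qed.

Lemma psum_mono u : (forall n, lc_le z0 (u n)) -> forall m k, lc_le (lc_psum u m) (lc_psum u (k + m)).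
Proof.
move=> h m; elim=> [|k IH]; first exact: lle_refl.
apply: (lle_trans IH); rewrite addSn /=.
have := lle_addl (lc_psum u (k + m)) (h (k + m)%N).
by have -> : lc_add (lc_psum u (k + m)) z0 = lc_psum u (k + m) by apply: lc_ext => r /=; ring.
Qed.

Lemma psum_le_lim u s : (forall n, lc_le z0 (u n)) -> cvgS (lc_psum u) s ->
  forall n, lc_le (lc_psum u n) s.
Proof.
move=> h hs n; apply: (cvgS_ge (u := fun k => lc_psum u (k + n))).
  by move=> k; exact: psum_mono.
exact: cvgS_shift.
Qed.

Lemma psum_le u v : (forall n, lc_le (u n) (v n)) -> forall n, lc_le (lc_psum u n) (lc_psum v n).
Proof. move=> h; elim=> [|n IH] /=; [exact: lle_refl|exact: lle_add]. Qed.

Lemma sandwich c d q : lc_le z0 c -> lc_le c d -> vb d q -> vb c q.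
Proof.
move=> hc hcd hd r hr; apply/eqP; rewrite -[_ == _]negbK; apply/negP => hx.
have [r0 [h0 hb0]] := min_supp hx.
have r0q : r0 < q.
  rewrite ltNge; apply/negP => hle; move: hx; rewrite hb0 ?eqxx //.
  exact: lt_le_trans hr hle.
case: hc => [hc|e]; last by move: h0; rewrite -e eqxx.
have p0 := pos_lead (llt0_pos hc) hb0 h0.
case: hcd => [hcd|e]; last by move: hx; rewrite e hd ?eqxx.
have p1 : 0 < lc_val (lc_sub d c) r0.
  apply: pos_lead (llt0_pos (llt_subpos hcd)) _ _.
  - move=> s hs /=; rewrite hb0 // hd; [ring| exact: lt_trans hs r0q].
  - by rewrite /= hd // add0r oppr_eq0.
move: p1; rewrite /= hd // add0r oppr_gt0 => p1.
by have := lt_trans p0 p1; rewrite ltxx.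
Qed.

End LC5.


Section LC6.
Variable R : realType.
Local Notation LC := (LC R).
Local Notation z0 := (lc0 R).
Implicit Types x y z a b c d e h l m : LC.
Implicit Types u v : nat -> LC.
Implicit Types A B X Y Z W : set LC.

Lemma lle_ext x y x' y' : lc_le x y -> (forall r, lc_val x r = lc_val x' r) ->
  (forall r, lc_val y r = lc_val y' r) -> lc_le x' y'.
Proof. by move=> h /lc_ext <- /lc_ext <-. Qed.

Lemma cover_ge0 A S s : cover_with_sum A S s -> lc_le z0 s.
Proof.
move=> [hI [_ hs]]; have hs' := cvg_S hs.
have h0 : forall n, lc_le z0 (ilength (S n)) by move=> n; left; exact: llt_subpos (hI n).
by apply: (cvgS_ge (psum_ge0 h0)) hs'.
Qed.

Lemma om_ge0 A m : outer_measure A m -> lc_le z0 m.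
Proof. by move=> [_ h]; apply: h => s [S /cover_ge0]. Qed.

Lemma om_uniq A m m' : outer_measure A m -> outer_measure A m' -> m = m'.
Proof.
move=> [h1 h2] [h3 h4]; apply: lle_antisym; [apply: h4|apply: h2] => //.
Qed.

Lemma cover_sub A B s : A `<=` B -> cover_sums B s -> cover_sums A s.
Proof. by move=> hAB [S [h1 [h2 h3]]]; exists S; split => //; split => //; exact: subset_trans h2. Qed.

Lemma om_mono A B a b : A `<=` B -> outer_measure A a -> outer_measure B b -> lc_le a b.
Proof.
move=> hAB [h1 h2] [h3 h4]; apply: h4 => s hs; apply: h1; exact: cover_sub hs.
Qed.

Lemma om_lb A m s : outer_measure A m -> cover_sums A s -> lc_le m s.
Proof. by move=> [h _]; apply: h. Qed.

Lemma om_near A m c : outer_measure A m -> lc_lt m c -> exists2 s, cover_sums A s & lc_lt s c.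
Proof.
move=> [h1 h2] hc; apply: contrapT => hn.
have : lc_le c m.
  apply: h2 => s hs; apply: lnot_lt_le => hsc; apply: hn; by exists s.
by apply: llt_not_le.
Qed.

Lemma cvgS_interleave w l : cvgS (fun k => w k.*2) l -> cvgS (fun k => w k.*2.+1) l -> cvgS w l.
Proof.
move=> h1 h2 e he; have [N1 hN1] := h1 e he; have [N2 hN2] := h2 e he.
exists (maxn N1 N2).*2 => n.
rewrite -(odd_double_half n); case: (odd n) => /= hn.
  rewrite add1n in hn *; rewrite leq_Sdouble in hn.
  apply: hN2; exact: leq_trans (leq_maxr _ _) hn.
rewrite add0n in hn *; rewrite leq_double in hn.
apply: hN1; exact: leq_trans (leq_maxl _ _) hn.
Qed.

Definition interl (S T : nat -> Defs.interval R) (j : nat) := if odd j then T j./2 else S j./2.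

Lemma psum_interl (S T : nat -> Defs.interval R) k :
  lc_psum (fun j => ilength (interl S T j)) k.*2 =
    lc_add (lc_psum (fun n => ilength (S n)) k) (lc_psum (fun n => ilength (T n)) k).
Proof.
elim: k => [|k IH]; first by apply: lc_ext => r /=; ring.
rewrite doubleS /= IH /interl /= odd_double /= uphalf_double doubleK.
by apply: lc_ext => r /=; ring.
Qed.

Lemma concat X Y s t : cover_sums X s -> cover_sums Y t -> cover_sums (X `|` Y) (lc_add s t).
Proof.
move=> [S [hS1 [hS2 hS3]]] [T [hT1 [hT2 hT3]]].
exists (interl S T); split; first by move=> j; rewrite /interl; case: odd.
split.
  move=> x [/hS2 [n _ hn]|/hT2 [n _ hn]].
    by exists n.*2 => //; rewrite /interl odd_double doubleK.
  by exists n.*2.+1 => //; rewrite /interl /= odd_double /= uphalf_double.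
apply: S_cvg; apply: cvgS_interleave.
  by apply: (cvgS_ext (cvgS_add (cvg_S hS3) (cvg_S hT3))) => k; rewrite psum_interl.
apply: (cvgS_ext (cvgS_add (cvgS_shift 1 (cvg_S hS3)) (cvg_S hT3))) => k.
rewrite addn1 /= psum_interl /interl odd_double doubleK.
by apply: lc_ext => r /=; ring.
Qed.

End LC6.


Section LC7.
Variable R : realType.
Local Notation LC := (LC R).
Local Notation z0 := (lc0 R).
Implicit Types x y z a b c d e h l m : LC.
Implicit Types A B X Y Z W : set LC.

Lemma spl B mB X Y W x y b' :
  outer_measure B mB -> outer_measure X x -> outer_measure Y y -> outer_measure W b' ->
  mB = lc_add (lc_add x y) b' -> forall Z, B `<=` Z `|` W -> Z `<=` X `|` Y ->
  outer_measure Z (lc_add x y).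
Proof.
move=> hB hX hY hW e Z hBZ hZXY; split.
- move=> c hc.
  have h1 : lc_le (lc_sub mB c) b'.
    apply: (proj2 hW) => d hd.
    have := om_lb hB (cover_sub hBZ (concat hc hd)) => /(lle_addr (lc_opp c)) h.
    by apply: (lle_ext h) => r /=; ring.
  have := lle_addr (lc_sub c b') h1; rewrite e => h.
  by apply: (lle_ext h) => r /=; ring.
- move=> m' hm'.
  have h2 : forall c2, cover_sums Y c2 -> lc_le (lc_sub m' c2) x.
    move=> c2 h; apply: (proj2 hX) => c1 h1.
    have := hm' _ (cover_sub hZXY (concat h1 h)) => /(lle_addr (lc_opp c2)) h'.
    by apply: (lle_ext h') => r /=; ring.
  have h3 : lc_le (lc_sub m' x) y.
    apply: (proj2 hY) => c2 h; have := lle_addr (lc_sub c2 x) (h2 c2 h) => h'.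
    by apply: (lle_ext h') => r /=; ring.
  have := lle_addr x h3 => h'.
  by apply: (lle_ext h') => r /=; ring.
Qed.

End LC7.
Module M8.
Import zify.


Section LC8.
Variable R : realType.

Lemma fin_reindex (f : nat * nat -> R) N J M :
  (forall n j, ~~ ((n < N) && (j < J))%N -> f (n, j) = 0) ->
  (forall n j, (n < N)%N -> (j < J)%N -> (Cantor.to_nat (n, j) < M)%N) ->
  \sum_(m < M) f (Cantor.of_nat m) = \sum_(n < N) \sum_(j < J) f (n : nat, j : nat).
Proof.
move=> hf hM.
pose AP := [seq (n, j) | n <- index_iota 0 N, j <- index_iota 0 J].
pose img := [seq Cantor.to_nat p | p <- AP].
have -> : \sum_(n < N) \sum_(j < J) f (n : nat, j : nat) = \sum_(p <- AP) f p.
  rewrite big_allpairs big_mkord; apply: eq_bigr => n _.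
  by rewrite big_mkord.
have -> : \sum_(p <- AP) f p = \sum_(m <- img) f (Cantor.of_nat m).
  by rewrite big_map; apply: eq_bigr => p _; rewrite Cantor.cancel_of_to.
have inj : injective Cantor.to_nat by move=> p q; exact: Cantor.to_nat_inj.
have uimg : uniq img.
  rewrite map_inj_uniq //; apply: allpairs_uniq; rewrite ?iota_uniq //.
  by move=> [a b] [c d] _ _ /= [-> ->].
have hperm : perm_eq [seq m <- index_iota 0 M | m \in img] img.
  apply: uniq_perm; first by rewrite filter_uniq // iota_uniq.
    exact: uimg.
  move=> m; rewrite mem_filter; case hm: (m \in img) => //=.
  move: hm => /mapP [[n j] /allpairsP [[a b] [ha hb /= [-> ->]]] ->].
  rewrite mem_index_iota /=; move: ha hb; rewrite !mem_index_iota /= => ha hb.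
  exact: hM.
rewrite -(perm_big _ hperm) big_filter big_mkcond big_mkord.
rewrite [RHS]big_mkcond /=; apply: eq_bigr => m _; case hm: (nat_of_ord m \in img) => //.
case e: (Cantor.of_nat m) => [n j]; apply: hf; apply/negP => /andP [hn hj].
move/negP: hm; apply; apply/mapP; exists (n, j); last by rewrite -e Cantor.cancel_to_of.
by apply: allpairs_f; rewrite mem_index_iota.
Qed.

Lemma bnd N0 J n j : (n < N0)%N -> (j < J)%N -> (Cantor.to_nat (n, j) < (N0 + J) * (N0 + J + 1))%N.
Proof. move=> hn hj; have := Cantor.to_nat_spec n j; nia. Qed.

Local Notation LC := (LC R).
Local Notation z0 := (lc0 R).

Lemma uniformJ (P : nat -> nat -> Prop) K : (forall n, exists J, forall j, (J <= j)%N -> P n j) ->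
  exists J, forall n j, (n < K)%N -> (J <= j)%N -> P n j.
Proof.
move=> h; elim: K => [|K [J hJ]]; first by exists 0%N.
have [J2 hJ2] := h K; exists (maxn J J2) => n j; rewrite ltnS leq_eqVlt => /orP [/eqP ->|hn] hj.
  exact: hJ2 (leq_trans (leq_maxr _ _) hj).
exact: hJ hn (leq_trans (leq_maxl _ _) hj).
Qed.

Lemma term_le (u : nat -> LC) s : (forall n, lc_le z0 (u n)) -> cvgS (lc_psum u) s -> forall j, lc_le (u j) s.
Proof.
move=> h hs j; apply: lle_trans (psum_le_lim h hs j.+1) => /=.
have := lle_addr (u j) (psum_ge0 h j) => h'.
by apply: (lle_ext h') => r /=; ring.
Qed.

Lemma flatten_cover (D : nat -> set LC) (c : nat -> LC) Cs :
  (forall N, cover_sums (D N) (c N)) -> cvgS (lc_psum c) Cs -> cover_sums (\bigcup_N D N) Cs.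
Proof.
move=> hc hCs.
have [S hS] := choice hc.
pose l n j := ilength (S n j).
have l0 : forall n j, lc_le z0 (l n j) by move=> n j; left; exact: llt_subpos ((hS n).1 j).
have rows : forall n, cvgS (lc_psum (l n)) (c n) by move=> n; exact: cvg_S (hS n).2.2.
pose g m := l (Cantor.of_nat m).1 (Cantor.of_nat m).2.
have box : forall q, exists N0 J, forall n j, ~~((n < N0) && (j < J))%N -> vb (l n j) q.
  move=> q; have [ht _] := series_point hCs; have [N0 hN0] := ht q.
  have [J hJ] := uniformJ (P := fun n j => vb (l n j) q) N0 (fun n => (series_point (rows n)).1 q).
  exists N0, J => n j; case: (ltnP n N0) => hn /= hj.
    by apply: hJ => //; rewrite leqNgt.
  apply: (sandwich (l0 n j) (term_le (l0 n) (rows n) j)); exact: hN0.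
have tg : tends0 g.
  move=> q; have [N0 [J hb]] := box q; exists ((N0 + J) * (N0 + J + 1))%N => m hm.
  rewrite /g; case e: (Cantor.of_nat m) => [n j] /=; apply: hb; apply/negP => /andP [hn hj].
  have := bnd hn hj; rewrite -e Cantor.cancel_to_of => hm'.
  by move: (leq_trans hm' hm); rewrite ltnn.
have [G [hG hGp]] := completeness tg.
have eq : G = Cs.
  apply: lc_ext => r.
  have [N0 [J hb]] := box (r + 1).
  have [K0 hK0] := (series_point hCs).2 r.
  pose N' := maxn N0 K0.
  have [J1 hJ1] := uniformJ (P := fun n j => lc_val (c n) r = lc_val (lc_psum (l n) j) r) N'
     (fun n => (series_point (rows n)).2 r).
  pose J' := maxn J J1.
  have [M1 hM1] := hGp r.
  pose M := maxn M1 ((N' + J') * (N' + J' + 1)).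
  rewrite (hM1 M (leq_maxl _ _)) (hK0 N' (leq_maxr _ _)) !psum_val.
  rewrite (fin_reindex (f := fun p => lc_val (l p.1 p.2) r) (N := N') (J := J')).
  - apply: eq_bigr => n _; rewrite (hJ1 n J' (ltn_ord n) (leq_maxr _ _)) psum_val //.
  - move=> n j hnj; apply: (hb n j); last by rewrite ltrDl.
    apply: contra hnj => /andP [h1 h2]; apply/andP; split.
      exact: leq_trans h1 (leq_maxl _ _).
    exact: leq_trans h2 (leq_maxl _ _).
  - move=> n j hn hj; exact: leq_trans (bnd hn hj) (leq_maxr _ _).
exists (fun m => S (Cantor.of_nat m).1 (Cantor.of_nat m).2); split.
  by move=> m; exact: (hS _).1.
split; last by apply: S_cvg; rewrite -eq; exact: hG.
move=> x [N _ hx]; have [j _ hj] := (hS N).2.1 x hx.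
by exists (Cantor.to_nat (N, j)) => //; rewrite Cantor.cancel_of_to.
Qed.

End LC8.

End M8.
Import M8.


Section LC9.
Variable R : realType.
Local Notation LC := (LC R).
Local Notation z0 := (lc0 R).

Lemma vb_mono (t q : rat) : q <= t -> vb (mono R t) q.
Proof. by move=> h r hr /=; rewrite (lt_eqF (lt_le_trans hr h)). Qed.

Lemma mono_pos (t : rat) : lc_lt z0 (mono R t).
Proof.
apply: lpos_lt0; exists t; split => /=; first by rewrite eqxx ltr01.
by move=> r hr; rewrite (lt_eqF hr).
Qed.

Lemma vb_add (x y : LC) q : vb x q -> vb y q -> vb (lc_add x y) q.
Proof. by move=> h1 h2 r hr /=; rewrite h1 // h2 // addr0. Qed.

Lemma tends0_add (u v : nat -> LC) : tends0 u -> tends0 v -> tends0 (fun n => lc_add (u n) (v n)).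
Proof.
move=> hu hv q; have [N1 h1] := hu q; have [N2 h2] := hv q; exists (maxn N1 N2) => n hn.
apply: vb_add; [apply: h1; exact: leq_trans (leq_maxl _ _) hn|apply: h2; exact: leq_trans (leq_maxr _ _) hn].
Qed.

Lemma psum_add (u v : nat -> LC) n :
  lc_psum (fun k => lc_add (u k) (v k)) n = lc_add (lc_psum u n) (lc_psum v n).
Proof. by apply: lc_ext => r; rewrite /= !psum_val -big_split. Qed.

Lemma limit_om (Uinf : set LC) (P D : nat -> set LC) (p d : nat -> LC) lam :
  (forall N, outer_measure (P N) (p N)) -> (forall N, P N `<=` Uinf) ->
  Uinf `<=` \bigcup_N D N -> (forall N, outer_measure (D N) (d N)) ->
  cvgS (lc_psum d) lam -> cvgS p lam -> outer_measure Uinf lam.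
Proof.
move=> hP hPU hUD hD hd hp; split.
  move=> c hc; apply: (cvgS_leq _ hp) => N.
  exact: om_lb (hP N) (cover_sub (hPU N) hc).
move=> m' hm'; apply: lnot_lt_le => hlt.
have he := llt_subpos hlt; set eps := lc_sub m' lam in he.
have [q0 hq0] := V1 he.
pose ep (N : nat) := mono R (q0 + N%:R).
have tep : tends0 ep.
  move=> q; exists (Num.Def.archi_bound `|q - q0|) => n hn; apply: vb_mono.
  have h1 := archi_boundP (normr_ge0 (q - q0)).
  have h2 : (Num.Def.archi_bound `|q - q0|)%:R <= n%:R :> rat by rewrite ler_nat.
  have h3 := ler_norm (q - q0).
  lra.
have [E [hE hEp]] := completeness tep.
have hEe : lc_lt E eps.
  apply: (proj1 (hq0 E _)) => r hr.
  have [K hK] := hEp r; rewrite (hK K (leqnn K)) psum_val big1 // => i _.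
  rewrite /= (lt_eqF (lt_le_trans hr _)) // lerDl ler0n //.
have hnear : forall N, exists c, cover_sums (D N) c /\ lc_lt c (lc_add (d N) (ep N)).
  move=> N; have hlt' : lc_lt (d N) (lc_add (d N) (ep N)).
    by apply: (lt_ext (llt_addl (d N) (mono_pos (q0 + N%:R)))) => r /=; ring.
  by have [c hc1 hc2] := om_near (hD N) hlt'; exists c.
have [c hc] := choice hnear.
have c0 : forall N, lc_le z0 (c N) by move=> N; have [[S hS] _] := hc N; exact: cover_ge0 hS.
have tde := tends0_add (series_point hd).1 tep.
have tc : tends0 c.
  move=> q; have [N hN] := tde q; exists N => n /hN hv.
  exact: sandwich (c0 n) (llt_le (hc n).2) hv.
have [Cs [hCs _]] := completeness tc.
have cov := cover_sub hUD (flatten_cover (fun N => (hc N).1) hCs).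
have h1 := hm' _ cov.
have h2 : lc_le Cs (lc_add lam E).
  apply: (cvgS_le (psum_le (fun n => llt_le (hc n).2)) hCs).
  by apply: (cvgS_ext (cvgS_add hd hE)) => n; rewrite psum_add.
have h3 : lc_lt (lc_add lam E) m'.
  by apply: (lt_ext (llt_addl lam hEe)) => r //=; rewrite /eps /=; ring.
exact: llt_not_le (lle_lt_trans h2 h3) h1.
Qed.

End LC9.


Section LC10.
Variable R : realType.
Local Notation LC := (LC R).
Local Notation z0 := (lc0 R).
Variable A : nat -> set LC.
Hypothesis hA : forall n, L_measurable (A n).

Definition U N := \bigcup_(n in [set k | (k <= N)%N]) A n.

Lemma US N : U N.+1 = U N `|` A N.+1.
Proof.
apply/seteqP; split => x.
  move=> [n /= hn hx]; move: hn; rewrite leq_eqVlt => /orP [/eqP e|hn].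
    by right; rewrite -e.
  by left; exists n.
move=> [[n hn hx]|hx]; first by exists n => //=; exact: leq_trans hn (leqnSn N).
by exists N.+1 => /=.
Qed.

Lemma U0 : U 0 = A 0.
Proof.
apply/seteqP; split => x; first by move=> [n /=]; rewrite leqn0 => /eqP ->.
by move=> hx; exists 0%N.
Qed.

Lemma Step B mB N p q : outer_measure B mB -> outer_measure (U N `&` B) p ->
  outer_measure (~` U N `&` B) q -> mB = lc_add p q ->
  exists a r, [/\ outer_measure (A N.+1 `&` (~` U N `&` B)) a,
    outer_measure (U N.+1 `&` B) (lc_add p a),
    outer_measure (~` U N.+1 `&` B) r & mB = lc_add (lc_add p a) r].
Proof.
move=> hB hp hq e.
have [_ h] := hA N.+1; have [a [r [h1 [h2 e2]]]] := h _ _ hq.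
have hW : ~` U N.+1 `&` B = ~` A N.+1 `&` (~` U N `&` B).
  rewrite US; apply/seteqP; split => x /=.
    by move=> [hn hb]; split; [move=> ha; apply: hn; right|split => // hu; apply: hn; left].
  by move=> [hn [hu hb]]; split => // -[|].
have emB : mB = lc_add (lc_add p a) r by rewrite e e2; apply: lc_ext => s /=; ring.
exists a, r; split => //; last by rewrite hW.
apply: (spl hB hp h1 h2 emB).
  move=> x hx; case: (pselect (U N.+1 x)) => hu; first by left.
  right; rewrite -hW; by split.
move=> x [hu hb]; case: (pselect (U N x)) => hn; first by left.
right; split; last by split.
by move: hu; rewrite US => -[|].
Qed.

Lemma Ind B mB : outer_measure B mB -> forall N, exists p q,
  [/\ outer_measure (U N `&` B) p, outer_measure (~` U N `&` B) q & mB = lc_add p q].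
Proof.
move=> hB; elim=> [|N [p [q [hp hq e]]]].
  rewrite U0; have [_ h] := hA 0; have [m1 [m2 [h1 [h2 e]]]] := h _ _ hB.
  by exists m1, m2.
have [a [r [_ h2 h3 e2]]] := Step hB hp hq e.
by exists (lc_add p a), r.
Qed.

Lemma first_in (x : LC) : (exists n, A n x) -> exists N, A N x /\ forall k, (k < N)%N -> ~ A k x.
Proof.
move=> [n hn]; elim/ltn_ind: n hn => n IH hn.
case: (pselect (exists k, (k < n)%N /\ A k x)) => [[k [hk hkx]]|hno].
  exact: IH hk hkx.
by exists n; split => // k hk hkx; apply: hno; exists k.
Qed.

Definition DB B N := if N is k.+1 then A k.+1 `&` (~` U k `&` B) else U 0 `&` B.
Definition D0 N := if N is k.+1 then A k.+1 `&` (~` U k `&` U k.+1) else U 0.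

Lemma cover_DB B : (\bigcup_n A n) `&` B `<=` \bigcup_N DB B N.
Proof.
move=> x [[n _ hn] hb]; have [N [hN hmin]] := first_in (ex_intro _ n hn).
exists N => //; case: N hN hmin => [|k] hN hmin /=.
  by split => //; exists 0%N.
split => //; split => //; move=> [j /= hj hjx]; by apply: (hmin j).
Qed.

Lemma cover_D0 : (\bigcup_n A n) `<=` \bigcup_N D0 N.
Proof.
move=> x [n _ hn]; have [N [hN hmin]] := first_in (ex_intro _ n hn).
exists N => //; case: N hN hmin => [|k] hN hmin /=.
  by exists 0%N.
split => //; split; last by rewrite /U; exists k.+1 => /=.
move=> [j /= hj hjx]; by apply: (hmin j).
Qed.

Lemma cvgS_unshift (u : nat -> LC) l : cvgS (fun n => u (n + 1)%N) l -> cvgS u l.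
Proof.
move=> h e he; have [N hN] := h e he; exists N.+1 => -[//|n] hn.
by have := hN n; rewrite addn1; apply.
Qed.

Lemma hD0 (mN : nat -> LC) : (forall N, outer_measure (U N) (mN N)) ->
  forall k, outer_measure (D0 k.+1) (lc_sub (mN k.+1) (mN k)).
Proof.
move=> hmN k.
have [p' [q' [hp' hq' e']]] := Ind (hmN k.+1) k.
have ep' : p' = mN k.
  apply: (om_uniq hp'); have -> : U k `&` U k.+1 = U k by rewrite US setIUr setIid; apply: setUidl; exact: subIsetl.
  exact: hmN.
have [a [r [h1 h2 _ _]]] := Step (hmN k.+1) hp' hq' e'.
have ea : lc_add p' a = mN k.+1 by apply: (om_uniq h2); rewrite setIid; exact: hmN.
have -> : lc_sub (mN k.+1) (mN k) = a by rewrite -ea ep'; apply: lc_ext => r' /=; ring.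
exact: h1.
Qed.

Lemma om_union (mN : nat -> LC) L : (forall N, outer_measure (U N) (mN N)) -> cvgS mN L ->
  outer_measure (\bigcup_n A n) L.
Proof.
move=> hmN hcv.
pose d0 N := if N is k.+1 then lc_sub (mN k.+1) (mN k) else mN 0.
have hps : forall N, lc_psum d0 N.+1 = mN N.
  elim=> [|N IH]; first by apply: lc_ext => r /=; ring.
  by rewrite /= in IH *; rewrite IH; apply: lc_ext => r /=; ring.
apply: (limit_om (P := U) (D := D0) (d := d0) hmN _ cover_D0).
- by move=> N x [n _ hn]; exists n.
- by case=> [|k] /=; [exact: hmN|exact: hD0].
- by apply: cvgS_unshift; apply: (cvgS_ext hcv) => n; rewrite addn1 hps.
- exact: hcv.
Qed.

Lemma meas_B (mN : nat -> LC) L B mB : (forall N, outer_measure (U N) (mN N)) -> cvgS mN L ->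
  outer_measure B mB -> exists m1 m2, outer_measure ((\bigcup_n A n) `&` B) m1 /\
    outer_measure (~` (\bigcup_n A n) `&` B) m2 /\ mB = lc_add m1 m2.
Proof.
move=> hmN hcv hB.
have : forall N, exists pq : LC * LC, [/\ outer_measure (U N `&` B) pq.1,
    outer_measure (~` U N `&` B) pq.2 & mB = lc_add pq.1 pq.2].
  by move=> N; have [p [q h]] := Ind hB N; exists (p, q).
move=> /choice [pq hpq].
pose p N := (pq N).1; pose q N := (pq N).2.
have hp N : outer_measure (U N `&` B) (p N) by have [] := hpq N.
have hq N : outer_measure (~` U N `&` B) (q N) by have [] := hpq N.
have he N : mB = lc_add (p N) (q N) by have [] := hpq N.
have hdel : forall N, outer_measure (DB B N.+1) (lc_sub (p N.+1) (p N)).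
  move=> N; have [a [r [h1 h2 _ _]]] := Step hB (hp N) (hq N) (he N).
  have ea := om_uniq h2 (hp N.+1).
  by have -> : lc_sub (p N.+1) (p N) = a by rewrite -ea; apply: lc_ext => r' /=; ring.
have hle : forall N, lc_le (lc_sub (p N.+1) (p N)) (lc_sub (mN N.+1) (mN N)).
  move=> N; apply: (om_mono _ (hdel N) (hD0 hmN N)).
  move=> x [ha [hn hb]]; split => //; split => //; by rewrite /U; exists N.+1 => /=.
have te := cvgS_tends0 (cvgS_diff hcv).
have tdel : tends0 (fun N => lc_sub (p N.+1) (p N)).
  move=> q0; have [N hN] := te q0; exists N => n /hN hv.
  exact: sandwich (om_ge0 (hdel n)) (hle n) hv.
pose dB N := if N is k.+1 then lc_sub (p k.+1) (p k) else p 0.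
have tdB : tends0 dB.
  move=> q0; have [N hN] := tdel q0; exists N.+1 => -[//|n] hn /=; exact: hN.
have [lam [hlam _]] := completeness tdB.
have hps : forall N, lc_psum dB N.+1 = p N.
  elim=> [|N IH]; first by apply: lc_ext => r /=; ring.
  by rewrite /= in IH *; rewrite IH; apply: lc_ext => r /=; ring.
have hpc : cvgS p lam.
  by apply: (cvgS_ext (cvgS_shift 1 hlam)) => n; rewrite addn1 hps.
have hm1 : outer_measure ((\bigcup_n A n) `&` B) lam.
  apply: (limit_om (P := fun N => U N `&` B) (D := DB B) (d := dB) hp _ (@cover_DB B) _ hlam hpc).
    by move=> N x [[n _ hn] hb]; split => //; exists n.
  by case=> [|k] /=; [exact: hp|exact: hdel].
exists lam, (lc_sub mB lam); split => //; split; last by apply: lc_ext => r /=; ring.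
split.
- move=> c hc.
  have h : lc_le (lc_sub mB c) lam.
    apply: (proj2 hm1) => d hd.
    have hsub : B `<=` (~` (\bigcup_n A n) `&` B) `|` ((\bigcup_n A n) `&` B).
      by move=> x hx; case: (pselect ((\bigcup_n A n) x)) => h; [right|left].
    have := om_lb hB (cover_sub hsub (concat hc hd)) => /(lle_addr (lc_opp c)) h'.
    by apply: (lle_ext h') => r /=; ring.
  have := lle_addr (lc_sub c lam) h => h'.
  by apply: (lle_ext h') => r /=; ring.
- move=> m' hm'.
  have hmq : forall N, lc_le m' (lc_sub mB (p N)).
    move=> N; have -> : lc_sub mB (p N) = q N by rewrite (he N); apply: lc_ext => r /=; ring.
    apply: (proj2 (hq N)) => s hs; apply: hm'; apply: (cover_sub _ hs).
    move=> x [hx hb]; split => // hu; apply: hx; move: hu => [n hn hxn]; exists n => //.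
  apply: (cvgS_ge hmq).
  exact: cvgS_add (cvgS_const mB) (cvgS_opp hpc).
Qed.

End LC10.

Theorem mainTheorem19 (R : realType) (A : nat -> set (LC R))
  (hA : forall n : nat, L_measurable (A n))
  (hlim : exists (mN : nat -> LC R) (L : LC R),
     (forall N : nat, outer_measure (\bigcup_(n in [set k | (k <= N)%N]) A n) (mN N)) /\
     lc_cvg mN L) :
  L_measurable (\bigcup_n A n).
Proof.
have [mN [L [hmN hcv]]] := hlim.
split; first by exists L; exact: (om_union hA hmN (cvg_S hcv)).
by move=> B mB hB; exact: (meas_B hA hmN (cvg_S hcv) hB).
Qed.
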